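(* Let $G$ be a $d$-regular graph with $n$ vertices such that $2k$ divides $dn$, where $k\ge3$ is an odd integer. Then $G$ has a $k$-star decomposition if and only if $G$ has an orientation $D$ such that $d^+_D(v)-d^-_D(v)\equiv d \pmod k$ for every $v\in V(G)$.
   Context: A $k$-star decomposition of $G$ is a partition of $E(G)$ into edge-disjoint copies of $K_{1,k}$. For an orientation $D$ of $G$, $d^+_D(v)$ and $d^-_D(v)$ denote the out-degree and in-degree of $v$. *)

(* Defs.v *)
From mathcomp Require Import all_boot all_order all_algebra.
Set Implicit Arguments. Unset Strict Implicit. Unset Printing Implicit Defensive.

Definition simple_graph (T : finType) (e : rel T) : Prop :=
  irreflexive e /\ symmetric e.

Definition nbhd (T : finType) (e : rel T) (v : T) : {set T} := [set u | e v u].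

Definition regular (T : finType) (e : rel T) (d : nat) : Prop :=
  forall v : T, #|nbhd e v| = d.

(* A star is a pair (center c, leaf set L); it is a copy of K_{1,k} in G
   iff #|L| = k and every leaf is adjacent to c. *)
Definition is_kstar (T : finType) (e : rel T) (k : nat) (s : T * {set T}) : bool :=
  (#|s.2| == k) && (s.2 \subset nbhd e s.1).

Definition star_has_edge (T : finType) (s : T * {set T}) (u v : T) : bool :=
  ((s.1 == u) && (v \in s.2)) || ((s.1 == v) && (u \in s.2)).

Definition kstar_decomposition (T : finType) (e : rel T) (k : nat)
  (S : {set T * {set T}}) : Prop :=
  (forall s, s \in S -> is_kstar e k s) /\
  (forall u v, e u v -> #|[set s in S | star_has_edge s u v]| = 1).

Definition has_kstar_decomposition (T : finType) (e : rel T) (k : nat) : Prop :=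
  exists S : {set T * {set T}}, kstar_decomposition e k S.

Definition orientation (T : finType) (e : rel T) (D : rel T) : Prop :=
  (forall u v, D u v -> e u v) /\ (forall u v, e u v -> D u v (+) D v u).

Definition outdeg (T : finType) (D : rel T) (v : T) : nat := #|[set u | D v u]|.
Definition indeg (T : finType) (D : rel T) (v : T) : nat := #|[set u | D u v]|.

(* Main.v *)
Require Import Defs.
From mathcomp Require Import all_boot all_order all_algebra zify.
Set Implicit Arguments. Unset Strict Implicit. Unset Printing Implicit Defensive.

Lemma deg_sum (T : finType) (e : rel T) (D : rel T) (v : T) :
  symmetric e -> orientation e D -> outdeg D v + indeg D v = #|nbhd e v|.
Proof.
move=> sym [DE Dx].
rewrite /outdeg /indeg -cardsUI.
have -> : [set u | D v u] :&: [set u | D u v] = set0.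
  apply/setP=> u; rewrite !inE; apply/negbTE/andP=> -[h1 h2].
  by have := Dx _ _ (DE _ _ h1); rewrite h1 h2.
rewrite cards0 addn0; apply: eq_card => u; rewrite !inE.
apply/orP/idP.
  by case=> h; [exact: DE | rewrite sym; exact: DE].
move=> h; have := Dx _ _ h; by case: (D v u); case: (D u v); auto.
Qed.

Definition Dof (T : finType) (S : {set T * {set T}}) : rel T :=
  fun u v => [exists s in S, (s.1 == v) && (u \in s.2)].

Lemma fwd_orient (T : finType) (e : rel T) k S :
  simple_graph e -> kstar_decomposition e k S -> orientation e (Dof S).
Proof.
move=> [irr sym] [Sk Su]; split.
  move=> u v /existsP[s /and3P[sS /eqP <- us]].
  have /andP[_ /subsetP sub] := Sk s sS.
  by have := sub _ us; rewrite inE sym.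
move=> u v euv.
have := Su _ _ euv; move/eqP/cards1P=> [s0 hs0].
have s0in : s0 \in [set s in S | star_has_edge s u v] by rewrite hs0 set11.
have uniq1 : forall s, s \in S -> star_has_edge s u v -> s = s0.
  by move=> s sS hs; apply/set1P; rewrite -hs0 inE sS hs.
move: s0in; rewrite inE => /andP[s0S].
rewrite /star_has_edge => /orP[] /andP[/eqP c1 l1].
-
  have -> : Dof S v u by apply/existsP; exists s0; rewrite s0S c1 eqxx l1.
  suff -> : Dof S u v = false by [].
  apply/negbTE/existsP=> -[s /and3P[sS /eqP c2 l2]].
  have := uniq1 s sS; rewrite /star_has_edge c2 eqxx l2 orbT => /(_ isT) es.
  by move: c1; rewrite -es c2 => uv; move: euv; rewrite uv irr.
- have -> : Dof S u v by apply/existsP; exists s0; rewrite s0S c1 eqxx l1.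
  suff -> : Dof S v u = false by [].
  apply/negbTE/existsP=> -[s /and3P[sS /eqP c2 l2]].
  have := uniq1 s sS; rewrite /star_has_edge c2 eqxx l2 /= => /(_ isT) es.
  by move: c1; rewrite -es c2 => uv; move: euv; rewrite uv irr.
Qed.

Lemma fwd_indeg (T : finType) (e : rel T) k S v :
  simple_graph e -> kstar_decomposition e k S ->
  indeg (Dof S) v = k * #|[set s in S | s.1 == v]|.
Proof.
move=> [irr sym] [Sk Su].
rewrite /indeg -sum1_card mulnC -sum_nat_cond_const.
transitivity (\sum_(s in S | s.1 == v) \sum_(u : T) (u \in s.2 : nat)).
  rewrite (exchange_big_dep xpredT) //=.
  rewrite [RHS](bigID (fun u => Dof S u v)) /= [X in _ + X]big1 ?addn0.
    apply: eq_big => [u|u Du]; first by rewrite inE.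
    move: Du; rewrite inE => /existsP[s0 /and3P[s0S /eqP c0 l0]].
    have euv : e u v.
      have /andP[_ /subsetP sub] := Sk _ s0S; have := sub _ l0; by rewrite inE c0 sym.
    have := Su _ _ euv => /eqP/cards1P[t ht].
    have uniq1 : forall s, s \in S -> star_has_edge s u v -> s = t.
      by move=> s sS hs; apply/set1P; rewrite -ht inE sS hs.
    have e0 : s0 = t by apply: uniq1 => //; rewrite /star_has_edge c0 eqxx l0 orbT.
    rewrite (bigD1 s0) /=; last by rewrite s0S c0 eqxx.
    rewrite l0 big1 // => s /andP[/andP[/andP[sS c] _] ne].
    case us: (u \in s.2) => //; case/negP: ne.
    by rewrite (uniq1 s sS) ?e0 // /star_has_edge c us orbT.
  move=> u nD; apply: big1 => s sP; case us: (u \in s.2) => //.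
  by case/negP: nD; apply/existsP; exists s; rewrite andbT in sP; rewrite andbA sP us.
apply: eq_bigr => s /andP[sS _].
have /andP[/eqP <- _] := Sk s sS.
rewrite -sum1_card [RHS]big_mkcond /=; apply: eq_bigr => u _; by case: (u \in s.2).
Qed.

Lemma card_block n k m j : 0 < k -> n = k * m -> j < m ->
  #|[set i : 'I_n | i %/ k == j]| = k.
Proof.
move=> k0 nE jm.
have hl : forall r : 'I_k, j * k + r < n.
  move=> r; have := ltn_ord r; rewrite nE; nia.
pose h (r : 'I_k) : 'I_n := Ordinal (hl r).
have hinj : injective h.
  by move=> r1 r2 /(congr1 val) /= /eqP; rewrite eqn_add2l => /eqP /val_inj.
rewrite -[RHS](card_ord k) -(card_imset _ hinj); apply: eq_card => i.
rewrite inE; apply/eqP/imsetP.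
  move=> ij; exists (Ordinal (ltn_pmod i k0)) => //; apply: val_inj => /=.
  by rewrite {1}(divn_eq i k) ij.
move=> [r _ ->] /=; rewrite divnMDl // divn_small ?addn0 //.
Qed.

Definition chunk (T : finType) (A : {set T}) k j :=
  [set u in A | index u (enum A) %/ k == j].

Lemma chunk_card (T : finType) (A : {set T}) k j :
  0 < k -> k %| #|A| -> chunk A k j != set0 -> #|chunk A k j| = k.
Proof.
move=> k0 /dvdnP[m nE] /set0Pn[u0].
rewrite inE => /andP[u0A /eqP ij].
have idxlt : forall u, u \in A -> index u (enum A) < #|A|.
  by move=> u uA; rewrite cardE index_mem mem_enum.
have jm : j < m.
  by rewrite -ij ltn_divLR // -nE idxlt.
pose g (i : 'I_#|A|) : T := nth u0 (enum A) i.
have ginj : injective g.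
  move=> i1 i2 /eqP; rewrite /g nth_uniq ?enum_uniq // -?cardE ?ltn_ord //.
  by move=> /eqP /val_inj.
rewrite -[RHS](card_block k0 (etrans nE (mulnC _ _)) jm) -(card_imset _ ginj).
apply: eq_card => u; rewrite inE; apply/andP/imsetP.
  move=> [uA ui]; exists (Ordinal (idxlt u uA)); first by rewrite inE.
  by rewrite /g /= nth_index // mem_enum.
move=> [i]; rewrite inE => /eqP ii ->; rewrite /g.
have iA : i < size (enum A) by rewrite -cardE.
rewrite -mem_enum mem_nth // index_uniq ?enum_uniq //; split => //; exact/eqP.
Qed.

Lemma bwd (T : finType) (e : rel T) k D :
  simple_graph e -> orientation e D -> 0 < k ->
  (forall v, k %| indeg D v) -> has_kstar_decomposition e k.
Proof.
move=> [irr sym] [DE Dx] k0 kd.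
pose I v := [set u | D u v].
pose S := [set s : T * {set T} | (s.2 != set0) &&
            [exists j : 'I_#|T|, s.2 == chunk (I s.1) k j]].
exists S; split.
  move=> [c L]; rewrite inE /= => /andP[Ln /existsP[j /eqP LE]].
  rewrite /is_kstar /=; apply/andP; split.
    by rewrite LE chunk_card // -?LE //; exact: kd.
  apply/subsetP=> u; rewrite LE !inE => /andP[Duc _]; rewrite sym; exact: DE.
have claim : forall u v, D u v -> #|[set s in S | star_has_edge s u v]| = 1.
  move=> u v Duv.
  have uI : u \in I v by rewrite inE.
  pose j0 := index u (enum (I v)) %/ k.
  have j0lt : j0 < #|T|.
    apply: (leq_ltn_trans (leq_div _ _)).
    apply: (leq_trans _ (max_card (I v))).
    by rewrite cardE index_mem mem_enum.
  pose t := (v, chunk (I v) k j0).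
  apply: (@eq_card1 _ t) => s; rewrite !inE; apply/idP/idP.
    move=> /andP[/andP[sn /existsP[j /eqP sE]]].
    rewrite /star_has_edge => /orP[] /andP[/eqP c l].
      move: l; rewrite sE inE c inE => /andP[Dvu _].
      by have := Dx _ _ (DE _ _ Duv); rewrite Duv Dvu.
    move: l; rewrite sE c inE => /andP[_ /eqP jE].
    by case: s sE c {sn} => a L /= -> ->; rewrite /t /j0 jE.
  move=> /eqP ->; rewrite /star_has_edge /= eqxx.
  have ut : u \in chunk (I v) k j0 by rewrite inE uI eqxx.
  rewrite ut orbT andbT; apply/andP; split; first by apply/set0Pn; exists u.
  by apply/existsP; exists (Ordinal j0lt).
move=> u v euv.
have := Dx _ _ euv; case Duv: (D u v) => /= Dvu; first exact: claim.
rewrite -(claim v u Dvu); apply: eq_card => s; rewrite !inE /star_has_edge.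
by rewrite orbC.
Qed.

Theorem lemma6 (T : finType) (e : rel T) (d k : nat) :
  simple_graph e -> regular e d ->
  odd k -> 3 <= k -> (2 * k %| d * #|T|)%N ->
  (has_kstar_decomposition e k <->
   exists D : rel T, orientation e D /\
     forall v : T,
       ((Posz (outdeg D v) - Posz (indeg D v))%R = Posz d %[mod Posz k])%Z).
Proof.
move=> sg reg ok k3 _.
have sym : symmetric e by case: sg.
split.
  move=> [S dec]; exists (Dof S); split; first exact: fwd_orient dec.
  move=> v.
  have hs := deg_sum v sym (fwd_orient sg dec); rewrite reg in hs.
  have hi := fwd_indeg v sg dec.
  set m := #|_| in hi.
  have -> : (Posz (outdeg (Dof S) v) - Posz (indeg (Dof S) v) =
            (- (2 * m)%:Z) * k%:Z + d%:Z)%R by lia.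
  exact: modzMDl.
move=> [D [oD hD]].
apply: (bwd sg oD); first by case: (k) ok k3.
move=> v.
have hs := deg_sum v sym oD; rewrite reg in hs.
have := hD v => /eqP; rewrite eqz_mod_dvd.
have -> : (Posz (outdeg D v) - Posz (indeg D v) - Posz d = - (2 * indeg D v)%N%:Z)%R by lia.
by rewrite dvdzE abszN /= Gauss_dvdr // coprimen2 ok.
Qed.
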